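(* Let $G$ be the two-player game with $A_i=\{a_{i1},a_{i2},a_{i3}\}$ and fitness vectors (row $a_{1r}$, column $a_{2c}$): row 1: $(4,4),(2,2),(0,5)$; row 2: $(2,2),(4,4),(0,0)$; row 3: $(5,0),(0,0),(2,2)$. Let $\mu=\delta_{\theta_1}\times\delta_{\theta_2}$ where $\theta_1=\theta_2=\theta\in\mathbb{R}^A$ with $\theta(a_{11},a_{21})=\theta(a_{12},a_{22})=2$, $\theta(a_{11},a_{22})=\theta(a_{12},a_{21})=1$, and $\theta(a)=0$ for all other $a\in A$. Let $s_1(\theta_1)=s_2(\theta_2)=(1/2,1/2,0)$. Then $s$ is a Bayesian–Nash equilibrium of the no-observability game with distribution $\mu$, and the configuration $(\mu,s)$ is stable under no observability.
   Context: Preference types: $\Theta=\mathbb{R}^A$, $A=A_1\times A_2$ (utility functions on $A$, extended bilinearly to mixed profiles); $\pi_i$ likewise extended. $\mathcal{M}(\Theta^2)$: product distributions $\mu=\mu_1\times\mu_2$ with finitely supported marginals; $\mu_{-i}=\mu_j$ ($j\neq i$). Mutants: for nonempty $J\subseteq\{1,2\}$, a mutant sub-profile is $\tilde\theta_J\in\prod_{j\in J}(\Theta\setminus\operatorname{supp}\mu_j)$ with shares $\varepsilon\in(0,1)^{|J|}$, $\|\varepsilon\|=\max_j\varepsilon_j$; post-entry $\tilde\mu^\varepsilon_i=(1-\varepsilon_i)\mu_i+\varepsilon_i\delta_{\tilde\theta_i}$ for $i\in J$, $\tilde\mu^\varepsilon_i=\mu_i$ otherwise. No observability: a strategy of player $i$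 is $s_i:\operatorname{supp}\mu_i\to\Delta(A_i)$; $s$ is a Bayesian–Nash equilibrium if for each $i$ and $\theta_i\in\operatorname{supp}\mu_i$, $s_i(\theta_i)\in\arg\max_{\sigma_i\in\Delta(A_i)}\sum_{\theta'_{-i}}\mu_{-i}(\theta'_{-i})\theta_i(\sigma_i,s_{-i}(\theta'_{-i}))$; $B_0(\mu)$ is the set of these; $(\mu,s)$ is a configuration, with aggregate outcome $x(\mu,s)=\big(\sum_{\theta_i}\mu_i(\theta_i)s_i(\theta_i)\big)_{i}$. Average fitness: $\Pi_{\theta_i}(\mu;s)=\pi_i(s_i(\theta_i),x(\mu,s)_{-i})$. Balanced: all types in each $\operatorname{supp}\mu_i$ have equal average fitness. Nearby set: for $\eta\ge0$, $B_0^\eta(\tilde\mu^\varepsilon;s)=\{\tilde s\in B_0(\tilde\mu^\varepsilon):\max_{i}\|\tilde s_i(\theta_i)-s_i(\theta_i)\|\le\eta\ \forall\theta\in\operatorname{supp}\mu\}$ (Euclidean norm). $(\mu,s)$ is stable if it is balanced and for every nonempty $J$, every $\tilde\theta_J$ and every $\eta>0$ there exist $\bar\eta\in[0,\eta)$ and $\bar\epsilon\in(0,1)$ such that for every $\varepsilon$ with $\|\varepsilon\|\in(0,\bar\epsilon)$, $B_0^{\bar\eta}(\tilde\mu^\varepsilon;s)\neq\emptyset$ and every $\tilde s\in B_0^{\bar\eta}(\tilde\mu^\varepsilon;s)$ satisfies either (i) some $j\in J$ has $\Pi_{\theta_j}(\tilde\mu^\varepsilon;\tilde s)>\Pi_{\tilde\theta_j}(\tilde\mu^\varepsilon;\tilde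 s)$ for all $\theta_j\in\operatorname{supp}\mu_j$, or (ii) for every $i$ all types in $\operatorname{supp}\tilde\mu^\varepsilon_i$ have equal average fitness under $(\tilde\mu^\varepsilon,\tilde s)$. *)

(* Defs.v *)
From Stdlib Require Import Reals List.
Import ListNotations.
Open Scope R_scope.

(* Each player has three actions a_{i1}, a_{i2}, a_{i3}. *)
Inductive act := x1 | x2 | x3.
Inductive player := P1 | P2.

Definition other (i : player) : player := match i with P1 => P2 | P2 => P1 end.

(* Theta = R^A, A = A1 x A2; first argument is player 1's action. *)
Definition Theta := act -> act -> R.
Definition mixed := act -> R.

Definition sum_act (f : act -> R) : R := f x1 + f x2 + f x3.

Definition is_mixed (sg : mixed) : Prop :=
  (forall a, 0 <= sg a) /\ sum_act sg = 1.

Definition U (u : Theta) (s1 s2 : mixed) : R :=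
  sum_act (fun a => sum_act (fun b => s1 a * s2 b * u a b)).

Definition payoff (i : player) (u : Theta) (own oth : mixed) : R :=
  match i with P1 => U u own oth | P2 => U u oth own end.

(* A finitely supported distribution on Theta, as a list of atoms
   (type, probability). *)
Definition dist := list (Theta * R).
Definition supp (m : dist) : list Theta := map fst m.

Definition wf_dist (m : dist) : Prop :=
  NoDup (supp m) /\ Forall (fun p => 0 < snd p) m /\
  fold_right (fun p acc => snd p + acc) 0 m = 1.

(* product distribution mu = mu_1 x mu_2, given by its marginals *)
Definition profile_dist := player -> dist.
(* strategies s_i : Theta -> Delta(A_i) (only values on supp mu_i matter) *)
Definition strat := player -> Theta -> mixed.

Definition dsum (m : dist) (f : Theta -> R) : R :=
  fold_right (fun p acc => snd p * f (fst p) + acc) 0 m.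

Definition bne (mu : profile_dist) (s : strat) : Prop :=
  forall i th, In th (supp (mu i)) ->
    is_mixed (s i th) /\
    forall sg, is_mixed sg ->
      dsum (mu (other i)) (fun th' => payoff i th sg (s (other i) th'))
      <= dsum (mu (other i)) (fun th' => payoff i th (s i th) (s (other i) th')).

Definition aggr (mu : profile_dist) (s : strat) (i : player) : mixed :=
  fun a => dsum (mu i) (fun th => s i th a).

Definition pi1 : Theta := fun r c =>
  match r, c with
  | x1, x1 => 4 | x1, x2 => 2 | x1, x3 => 0
  | x2, x1 => 2 | x2, x2 => 4 | x2, x3 => 0
  | x3, x1 => 5 | x3, x2 => 0 | x3, x3 => 2
  end.
Definition pi2 : Theta := fun r c =>
  match r, c with
  | x1, x1 => 4 | x1, x2 => 2 | x1, x3 => 5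
  | x2, x1 => 2 | x2, x2 => 4 | x2, x3 => 0
  | x3, x1 => 0 | x3, x2 => 0 | x3, x3 => 2
  end.
Definition fit (i : player) : Theta := match i with P1 => pi1 | P2 => pi2 end.

Definition avgfit (mu : profile_dist) (s : strat) (i : player) (th : Theta) : R :=
  payoff i (fit i) (s i th) (aggr mu s (other i)).

Definition balanced (mu : profile_dist) (s : strat) : Prop :=
  forall i th th', In th (supp (mu i)) -> In th' (supp (mu i)) ->
    avgfit mu s i th = avgfit mu s i th'.

(* Mutant entry: J : player -> bool encodes J, tt i the mutant type of
   i in J, eps i its share. *)
Definition post (J : player -> bool) (tt : player -> Theta) (eps : player -> R)
  (mu : profile_dist) : profile_dist :=
  fun i => if J i then (tt i, eps i) :: map (fun p => (fst p, (1 - eps i) * snd p)) (mu i)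
           else mu i.

Definition normJ (J : player -> bool) (eps : player -> R) : R :=
  Rmax (if J P1 then eps P1 else 0) (if J P2 then eps P2 else 0).

Definition enorm (v : mixed) : R := sqrt (sum_act (fun a => v a * v a)).

Definition nearby (mu mu' : profile_dist) (s : strat) (eta : R) (st : strat) : Prop :=
  bne mu' st /\
  forall i th, In th (supp (mu i)) ->
    enorm (fun a => st i th a - s i th a) <= eta.

Definition stable (mu : profile_dist) (s : strat) : Prop :=
  balanced mu s /\
  forall (J : player -> bool) (tt : player -> Theta),
    (exists i, J i = true) ->
    (forall i, J i = true -> ~ In (tt i) (supp (mu i))) ->
    forall eta, 0 < eta ->
    exists etab epsb, 0 <= etab < eta /\ 0 < epsb < 1 /\
      forall eps : player -> R,
        (forall i, J i = true -> 0 < eps i < 1) ->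
        0 < normJ J eps < epsb ->
        (exists st, nearby mu (post J tt eps mu) s etab st) /\
        forall st, nearby mu (post J tt eps mu) s etab st ->
          (exists j, J j = true /\
             forall th, In th (supp (mu j)) ->
               avgfit (post J tt eps mu) st j th > avgfit (post J tt eps mu) st j (tt j))
          \/ balanced (post J tt eps mu) st.

Definition theta0 : Theta := fun r c =>
  match r, c with
  | x1, x1 => 2 | x2, x2 => 2 | x1, x2 => 1 | x2, x1 => 1
  | _, _ => 0
  end.
Definition mu0 : profile_dist := fun _ => [(theta0, 1)].
Definition half_half : mixed := fun a =>
  match a with x1 => 1/2 | x2 => 1/2 | x3 => 0 end.
Definition s0 : strat := fun _ _ => half_half.

(* Main.v *)
Require Import Defs.
From Stdlib Require Import Reals List Lra Psatz ClassicalEpsilon FunctionalExtensionality Classical.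
Import ListNotations.
Open Scope R_scope.

Definition pure (a : act) : mixed := fun b =>
  match a, b with x1, x1 => 1 | x2, x2 => 1 | x3, x3 => 1 | _, _ => 0 end.

Lemma pure_mixed a : is_mixed (pure a).
Proof. split; [intro b; destruct a, b; simpl; lra | destruct a; unfold sum_act; simpl; lra]. Qed.

Lemma payoff_decomp i u sg q :
  payoff i u sg q = sg x1 * payoff i u (pure x1) q + sg x2 * payoff i u (pure x2) q
                  + sg x3 * payoff i u (pure x3) q.
Proof. destruct i; cbv beta iota delta [payoff U sum_act pure]; ring. Qed.

Lemma payoff_lin i u sg m s E :
  payoff i u sg (fun a => E * m a + (1 - E) * s a) = E * payoff i u sg m + (1 - E) * payoff i u sg s.
Proof. destruct i; cbv beta iota delta [payoff U sum_act]; ring. Qed.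

Definition Ef (J : player -> bool) (eps : player -> R) i := if J i then eps i else 0.

Lemma dsum_post J tt eps i f :
  dsum (post J tt eps mu0 i) f = Ef J eps i * f (tt i) + (1 - Ef J eps i) * f theta0.
Proof. unfold post, mu0, Ef, dsum; destruct (J i); simpl; ring. Qed.

Lemma aggr_post J tt eps st i :
  aggr (post J tt eps mu0) st i = fun a => Ef J eps i * st i (tt i) a + (1 - Ef J eps i) * st i theta0 a.
Proof. extensionality a. unfold aggr. apply dsum_post. Qed.

Lemma exp_pay J tt eps st i th sg :
  dsum (post J tt eps mu0 (other i)) (fun th' => payoff i th sg (st (other i) th'))
  = payoff i th sg (aggr (post J tt eps mu0) st (other i)).
Proof. rewrite dsum_post, aggr_post, payoff_lin. reflexivity. Qed.

Lemma in_supp_post J tt eps i th :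
  In th (supp (post J tt eps mu0 i)) -> (J i = true /\ th = tt i) \/ th = theta0.
Proof. unfold post, mu0, supp; destruct (J i); simpl; intuition. Qed.

Lemma theta0_in J tt eps i : In theta0 (supp (post J tt eps mu0 i)).
Proof. unfold post, mu0, supp; destruct (J i); simpl; auto. Qed.

Lemma tt_in J tt eps i : J i = true -> In (tt i) (supp (post J tt eps mu0 i)).
Proof. unfold post, mu0, supp; intro H; rewrite H; simpl; auto. Qed.

Lemma enorm_le v e : 0 <= e -> sum_act (fun a => v a * v a) <= e * e -> enorm v <= e.
Proof. intros He H. unfold enorm. rewrite <- (sqrt_square e He). apply sqrt_le_1_alt. exact H. Qed.

Lemma enorm_ge v e a : enorm v <= e -> v a * v a <= e * e.
Proof. unfold enorm; intro H.
  assert (Hs : 0 <= sum_act (fun a => v a * v a)) by (unfold sum_act; nra).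
  pose proof (sqrt_sqrt _ Hs). pose proof (sqrt_pos (sum_act (fun a => v a * v a))).
  assert (v a * v a <= sum_act (fun a => v a * v a)) by (unfold sum_act; destruct a; nra).
  nra. Qed.

Lemma th0_x1 k q : payoff k theta0 (pure x1) q = 2 * q x1 + q x2.
Proof. destruct k; cbv beta iota delta [payoff U sum_act pure theta0]; ring. Qed.
Lemma th0_x2 k q : payoff k theta0 (pure x2) q = q x1 + 2 * q x2.
Proof. destruct k; cbv beta iota delta [payoff U sum_act pure theta0]; ring. Qed.
Lemma th0_x3 k q : payoff k theta0 (pure x3) q = 0.
Proof. destruct k; cbv beta iota delta [payoff U sum_act pure theta0]; ring. Qed.

Lemma inc_analysis k (s q : mixed) :
  is_mixed s -> s x1 > 0 -> s x2 > 0 -> q x1 > 0 -> q x2 >= 0 ->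
  (forall sg, is_mixed sg -> payoff k theta0 sg q <= payoff k theta0 s q) ->
  q x1 = q x2 /\ s x3 = 0.
Proof.
  intros [Hn Hs] H1 H2 Hq Hq2 Hb.
  pose proof (Hb _ (pure_mixed x1)) as B1.
  pose proof (Hb _ (pure_mixed x2)) as B2.
  pose proof (Hb _ (pure_mixed x3)) as B3.
  rewrite (payoff_decomp k theta0 s q) in B1, B2, B3.
  rewrite !th0_x1, !th0_x2, !th0_x3 in *.
  unfold sum_act in Hs. pose proof (Hn x3).
  set (V := s x1 * (2 * q x1 + q x2) + s x2 * (q x1 + 2 * q x2) + s x3 * 0) in *.
  assert (E1 : s x1 * (V - (2 * q x1 + q x2)) + s x2 * (V - (q x1 + 2 * q x2)) + s x3 * V = 0)
    by (unfold V; replace (s x3) with (1 - s x1 - s x2) by lra; ring).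
  assert (A1 : 0 <= s x1 * (V - (2 * q x1 + q x2))) by nra.
  assert (A2 : 0 <= s x2 * (V - (q x1 + 2 * q x2))) by nra.
  assert (A3 : 0 <= s x3 * V) by nra.
  assert (Z1 : s x1 * (V - (2 * q x1 + q x2)) = 0) by lra.
  assert (Z2 : s x2 * (V - (q x1 + 2 * q x2)) = 0) by lra.
  assert (Z3 : s x3 * V = 0) by lra.
  apply Rmult_integral in Z1. apply Rmult_integral in Z2. apply Rmult_integral in Z3.
  destruct Z1 as [Z1|Z1]; [lra|]. destruct Z2 as [Z2|Z2]; [lra|].
  split; [lra|]. destruct Z3 as [Z3|Z3]; [exact Z3| lra].
Qed.

Lemma fit_diff j (s m q : mixed) :
  is_mixed s -> s x3 = 0 -> is_mixed m -> q x1 = q x2 ->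
  payoff j (fit j) s q - payoff j (fit j) m q = m x3 * (q x1 - 2 * q x3).
Proof.
  intros [_ Hs] H3 [_ Hm] Hq. unfold sum_act in Hs, Hm.
  destruct j; cbv beta iota delta [payoff U sum_act fit pi1 pi2]; rewrite H3, <- Hq;
  replace (s x2) with (1 - s x1) by lra;
  replace (m x2) with (1 - m x1 - m x3) by lra; ring.
Qed.

Definition qc (c : R) : mixed := fun a => match a with x1 => c | x2 => c | x3 => 1 - 2 * c end.
Definition P i u c a := payoff i u (pure a) (qc c).

Lemma P_aff i u c a : P i u c a = P i u (1/2) a + 2 * (c - 1/2) * (P i u 1 a - P i u (1/2) a).
Proof. unfold P; destruct i, a; cbv beta iota delta [payoff U sum_act pure qc]; field. Qed.

Definition mg (f : R -> R) : R :=
  if Rlt_dec 0 (f (1/2)) then f (1/2) / (2 * Rabs (f 1 - f (1/2)) + 1) else 1.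

Lemma mg_pos f : 0 < mg f.
Proof. unfold mg. destruct (Rlt_dec 0 (f (1/2))); [|lra].
  apply Rdiv_lt_0_compat; [lra|]. pose proof (Rabs_pos (f 1 - f (1/2))); lra. Qed.

Lemma mg_ok f c : (forall c, f c = f (1/2) + 2 * (c - 1/2) * (f 1 - f (1/2))) ->
  0 < f (1/2) -> Rabs (c - 1/2) <= mg f -> 0 < f c.
Proof.
  intros Ha Hp Hc. unfold mg in Hc. destruct (Rlt_dec 0 (f (1/2))) as [_|]; [|lra].
  rewrite Ha. set (b := f 1 - f (1/2)) in *. set (M := f (1/2) / (2 * Rabs b + 1)) in *.
  assert (HM : M * (2 * Rabs b + 1) = f (1/2)).
  { unfold M. field. pose proof (Rabs_pos b). lra. }
  pose proof (Rabs_pos b).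
  assert (2 * (c - 1/2) * b >= - (2 * Rabs (c - 1/2) * Rabs b)).
  { assert (Rabs (2 * (c - 1/2) * b) = 2 * Rabs (c - 1/2) * Rabs b).
    { rewrite !Rabs_mult. rewrite (Rabs_right 2) by lra. ring. }
    pose proof (Rle_abs (- (2 * (c - 1/2) * b))). rewrite Rabs_Ropp in *. lra. }
  pose proof (Rabs_pos (c - 1/2)).
  assert (Rabs (c - 1/2) * Rabs b <= M * Rabs b) by nra.
  assert (0 < M). { unfold M. apply Rdiv_lt_0_compat; lra. }
  nra.
Qed.

Definition marg i u := Rmin (mg (fun c => P i u c x3 - P i u c x1)) (mg (fun c => P i u c x3 - P i u c x2)).

Lemma marg_pos i u : 0 < marg i u.
Proof. unfold marg. apply Rmin_glb_lt; apply mg_pos. Qed.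

Definition sb i u c : bool :=
  if Rlt_dec (P i u c x1) (P i u c x3) then
    (if Rlt_dec (P i u c x2) (P i u c x3) then true else false) else false.

Lemma x3_best i u c : sb i u (1/2) = true -> Rabs (c - 1/2) <= marg i u ->
  forall a, P i u c a <= P i u c x3.
Proof.
  unfold sb; intros Hs Hc.
  destruct (Rlt_dec (P i u (1/2) x1) (P i u (1/2) x3)) as [h1|]; [|discriminate].
  destruct (Rlt_dec (P i u (1/2) x2) (P i u (1/2) x3)) as [h2|]; [|discriminate].
  assert (Haff : forall a b, forall c, (fun c => P i u c a - P i u c b) c =
     (fun c => P i u c a - P i u c b) (1/2) + 2 * (c - 1/2) *
     ((fun c => P i u c a - P i u c b) 1 - (fun c => P i u c a - P i u c b) (1/2))).
  { intros a b c0. simpl. rewrite (P_aff i u c0 a), (P_aff i u c0 b). ring. }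
  unfold marg in Hc.
  pose proof (mg_ok _ c (Haff x3 x1) ltac:(simpl; lra) ltac:(eapply Rle_trans; [exact Hc| apply Rmin_l])).
  pose proof (mg_ok _ c (Haff x3 x2) ltac:(simpl; lra) ltac:(eapply Rle_trans; [exact Hc| apply Rmin_r])).
  simpl in *. intro a; destruct a; lra.
Qed.

Definition argmax3 i u c : act :=
  if Rle_dec (P i u c x2) (P i u c x1) then
    (if Rle_dec (P i u c x3) (P i u c x1) then x1
     else if Rle_dec (P i u c x3) (P i u c x2) then x2 else x3)
  else if Rle_dec (P i u c x3) (P i u c x2) then x2 else x3.

Lemma argmax_best i u c a : P i u c a <= P i u c (argmax3 i u c).
Proof.
  unfold argmax3.
  destruct (Rle_dec (P i u c x2) (P i u c x1)); [destruct (Rle_dec (P i u c x3) (P i u c x1))|];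
  repeat match goal with |- context [Rle_dec ?a ?b] => destruct (Rle_dec a b) end;
  destruct a; lra.
Qed.

Lemma argmax_x3 i u c : argmax3 i u c = x3 -> sb i u c = true.
Proof.
  unfold argmax3, sb.
  destruct (Rle_dec (P i u c x2) (P i u c x1)); [destruct (Rle_dec (P i u c x3) (P i u c x1))|];
  repeat match goal with |- context [Rle_dec ?a ?b] => destruct (Rle_dec a b) end;
  try discriminate; intros _;
  repeat match goal with |- context [Rlt_dec ?a ?b] => destruct (Rlt_dec a b) end; auto; lra.
Qed.
Open Scope bool_scope.

Section Constr.
Variables (J : player -> bool) (tt : player -> Theta) (eps : player -> R).

Definition mutf (i : player) : act :=
  if J P1 && sb P1 (tt P1) (1/2) then
    match i with P1 => x3 | P2 => argmax3 P2 (tt P2) ((1 - Ef J eps P1) / 2) end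
  else if J P2 && sb P2 (tt P2) (1/2) then
    match i with P2 => x3 | P1 => argmax3 P1 (tt P1) ((1 - Ef J eps P2) / 2) end
  else argmax3 i (tt i) (1/2).

Definition cf i := (1 - Ef J eps i * pure (mutf i) x3) / 2.
Definition sigf i : mixed := fun a => match a with
  | x1 => (cf i - Ef J eps i * pure (mutf i) x1) / (1 - Ef J eps i)
  | x2 => (cf i - Ef J eps i * pure (mutf i) x2) / (1 - Ef J eps i)
  | x3 => 0 end.
Definition stf : strat := fun i th =>
  if excluded_middle_informative (th = theta0) then sigf i else pure (mutf i).

Hypothesis HE : forall i, 0 <= Ef J eps i <= 1/10.

Lemma sig_mixed i : is_mixed (sigf i).
Proof.
  pose proof (HE i). unfold sigf, cf. split.
  - intro a; destruct a; [| |lra]; destruct (mutf i); simpl;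
    apply Rmult_le_pos; try (apply Rlt_le, Rinv_0_lt_compat; lra); lra.
  - unfold sum_act. destruct (mutf i); simpl; field; lra.
Qed.

Lemma stf_th0 i : stf i theta0 = sigf i.
Proof. unfold stf. destruct (excluded_middle_informative (theta0 = theta0)); congruence. Qed.

Lemma stf_tt i : tt i <> theta0 -> stf i (tt i) = pure (mutf i).
Proof. unfold stf. destruct (excluded_middle_informative (tt i = theta0)); congruence. Qed.

Hypothesis Htt : forall i, J i = true -> tt i <> theta0.

Lemma aggr_stf i : aggr (post J tt eps mu0) stf i = qc (cf i).
Proof.
  rewrite aggr_post. extensionality a. rewrite stf_th0.
  pose proof (HE i).
  assert (Hm : Ef J eps i * stf i (tt i) a = Ef J eps i * pure (mutf i) a).
  { unfold Ef in *. destruct (J i) eqn:Hj; [rewrite stf_tt by auto; auto | ring]. }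
  rewrite Hm. unfold sigf, qc, cf. destruct a, (mutf i); simpl; field; lra.
Qed.

Lemma cf_range i : Rabs (cf i - 1/2) <= Ef J eps i / 2.
Proof. pose proof (HE i). unfold cf. destruct (mutf i); simpl.
  1,2: replace ((1 - Ef J eps i * 0) / 2 - 1/2) with (0:R) by field; rewrite Rabs_R0; lra.
  replace ((1 - Ef J eps i * 1) / 2 - 1/2) with (- (Ef J eps i / 2)) by field.
  rewrite Rabs_Ropp, Rabs_right; lra.
Qed.

Lemma Ef_false i : J i = false -> Ef J eps i = 0.
Proof. unfold Ef; intro H; rewrite H; auto. Qed.
Lemma Ef_true i : J i = true -> Ef J eps i = eps i.
Proof. unfold Ef; intro H; rewrite H; auto. Qed.

Hypothesis Hmarg : forall i o, Ef J eps o <= marg i (tt i).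

Lemma mut_best i : J i = true -> forall a,
  P i (tt i) (cf (other i)) a <= P i (tt i) (cf (other i)) (mutf i).
Proof.
  intros Hj a.
  assert (Hr : forall o, Rabs (cf o - 1/2) <= marg i (tt i)).
  { intro o. pose proof (cf_range o). pose proof (Hmarg i o). pose proof (HE o). lra. }
  destruct i; cbn [other].
  - destruct (sb P1 (tt P1) (1/2)) eqn:S1.
    + assert (M : mutf P1 = x3) by (unfold mutf; rewrite Hj, S1; reflexivity).
      rewrite M. apply x3_best; auto.
    + destruct (J P2 && sb P2 (tt P2) (1/2)) eqn:S2.
      * assert (M : mutf P1 = argmax3 P1 (tt P1) ((1 - Ef J eps P2) / 2))
          by (unfold mutf; rewrite Hj, S1, S2; reflexivity).
        assert (cf P2 = (1 - Ef J eps P2) / 2).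
        { unfold cf, mutf. rewrite Hj, S1, S2. simpl. lra. }
        rewrite M, H. apply argmax_best.
      * assert (M : mutf P1 = argmax3 P1 (tt P1) (1/2))
          by (unfold mutf; rewrite Hj, S1, S2; reflexivity).
        assert (cf P2 = 1/2).
        { unfold cf, mutf. rewrite Hj, S1, S2. simpl.
          destruct (J P2) eqn:J2.
          - simpl in S2. destruct (argmax3 P2 (tt P2) (1/2)) eqn:A; simpl; try lra.
            apply argmax_x3 in A. congruence.
          - rewrite Ef_false by auto. lra. }
        rewrite M, H. apply argmax_best.
  - destruct (J P1 && sb P1 (tt P1) (1/2)) eqn:S1.
    + assert (M : mutf P2 = argmax3 P2 (tt P2) ((1 - Ef J eps P1) / 2))
        by (unfold mutf; rewrite S1; reflexivity).
      assert (cf P1 = (1 - Ef J eps P1) / 2).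
      { unfold cf, mutf. rewrite S1. simpl. lra. }
      rewrite M, H. apply argmax_best.
    + destruct (sb P2 (tt P2) (1/2)) eqn:S2.
      * assert (M : mutf P2 = x3) by (unfold mutf; rewrite S1, Hj, S2; reflexivity).
        rewrite M. apply x3_best; auto.
      * assert (M : mutf P2 = argmax3 P2 (tt P2) (1/2))
          by (unfold mutf; rewrite S1, Hj, S2; reflexivity).
        assert (cf P1 = 1/2).
        { unfold cf, mutf. rewrite S1, Hj, S2. simpl.
          destruct (J P1) eqn:J1.
          - simpl in S1. destruct (argmax3 P1 (tt P1) (1/2)) eqn:A; simpl; try lra.
            apply argmax_x3 in A. congruence.
          - rewrite Ef_false by auto. lra. }
        rewrite M, H. apply argmax_best.
Qed.

Lemma bne_stf : bne (post J tt eps mu0) stf.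
Proof.
  intros i th Hin. apply in_supp_post in Hin.
  destruct Hin as [[Hj ->] | ->].
  - rewrite stf_tt by auto. split; [apply pure_mixed|].
    intros sg [Hn Hs]. rewrite !exp_pay, aggr_stf.
    rewrite (payoff_decomp i (tt i) sg). rewrite (payoff_decomp i (tt i) (pure (mutf i))).
    pose proof (mut_best i Hj) as B. unfold P in B.
    pose proof (B x1). pose proof (B x2). pose proof (B x3).
    set (v := payoff i (tt i) (pure (mutf i)) (qc (cf (other i)))) in *.
    assert (Hv : pure (mutf i) x1 * payoff i (tt i) (pure x1) (qc (cf (other i))) +
      pure (mutf i) x2 * payoff i (tt i) (pure x2) (qc (cf (other i))) +
      pure (mutf i) x3 * payoff i (tt i) (pure x3) (qc (cf (other i))) = v).
    { unfold v. destruct (mutf i); cbv beta iota delta [pure]; ring. }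
    rewrite Hv. unfold sum_act in Hs. pose proof (Hn x1). pose proof (Hn x2). pose proof (Hn x3).
    nra.
  - rewrite stf_th0. split; [apply sig_mixed|].
    intros sg [Hn Hs]. rewrite !exp_pay, aggr_stf.
    rewrite (payoff_decomp i theta0 sg), (payoff_decomp i theta0 (sigf i)).
    rewrite !th0_x1, !th0_x2, !th0_x3. unfold qc.
    pose proof (sig_mixed i) as [Hn' Hs']. unfold sum_act in Hs, Hs'.
    assert (sigf i x3 = 0) by reflexivity.
    pose proof (HE (other i)). assert (0 <= cf (other i)).
    { unfold cf. destruct (mutf (other i)); simpl; lra. }
    pose proof (Hn x1). pose proof (Hn x2). pose proof (Hn x3). nra.
Qed.

Lemma sig_close i etab : Ef J eps i <= etab / 2 -> enorm (fun a => sigf i a - half_half a) <= etab.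
Proof.
  intro H. pose proof (HE i). apply enorm_le; [lra|].
  unfold sum_act, sigf, half_half, cf. set (E := Ef J eps i) in *.
  destruct (mutf i); simpl.
  - replace ((1 - E * 0) / 2 - E * 1) with (1/2 - E) by field.
    replace ((1/2 - E) / (1 - E) - 1/2) with (- (E / (2 * (1 - E)))) by (field; lra).
    replace ((1 - E * 0) / 2 - E * 0) with (1/2) by field.
    replace (1/2 / (1 - E) - 1/2) with (E / (2 * (1 - E))) by (field; lra).
    assert (0 <= E / (2 * (1 - E)) <= etab / 2).
    { split. apply Rmult_le_pos; [lra| apply Rlt_le, Rinv_0_lt_compat; lra].
      apply Rmult_le_reg_r with (2 * (1 - E)); [lra|]. unfold Rdiv. rewrite Rmult_assoc, Rinv_l by lra. nra. }
    nra.
  - replace ((1 - E * 0) / 2 - E * 1) with (1/2 - E) by field.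
    replace ((1/2 - E) / (1 - E) - 1/2) with (- (E / (2 * (1 - E)))) by (field; lra).
    replace ((1 - E * 0) / 2 - E * 0) with (1/2) by field.
    replace (1/2 / (1 - E) - 1/2) with (E / (2 * (1 - E))) by (field; lra).
    assert (0 <= E / (2 * (1 - E)) <= etab / 2).
    { split. apply Rmult_le_pos; [lra| apply Rlt_le, Rinv_0_lt_compat; lra].
      apply Rmult_le_reg_r with (2 * (1 - E)); [lra|]. unfold Rdiv. rewrite Rmult_assoc, Rinv_l by lra. nra. }
    nra.
  - replace ((1 - E * 1) / 2 - E * 0) with ((1 - E) / 2) by field.
    replace ((1 - E) / 2 / (1 - E) - 1/2) with 0 by (field; lra). nra.
Qed.

End Constr.
Close Scope bool_scope.

Lemma bne0 : bne mu0 s0.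
Proof.
  intros i th Hin. unfold mu0, supp in Hin. simpl in Hin. destruct Hin as [<-|[]].
  split.
  - split; [intro a; destruct a; unfold s0, half_half; lra | unfold sum_act, s0, half_half; lra].
  - intros sg [Hn Hs]. unfold mu0, dsum, s0. simpl.
    rewrite !Rmult_1_l, !Rplus_0_r.
    rewrite (payoff_decomp i theta0 sg), (payoff_decomp i theta0 half_half), !th0_x1, !th0_x2, !th0_x3.
    unfold half_half; unfold sum_act in Hs. pose proof (Hn x3). lra.
Qed.

Lemma other_other k : other (other k) = k.
Proof. destruct k; reflexivity. Qed.

Lemma dichotomy J tt eps st etab :
  (forall i, 0 <= Ef J eps i <= 1/10) -> etab <= 1/4 ->
  nearby mu0 (post J tt eps mu0) s0 etab st ->
  (exists j, J j = true /\
     forall th, In th (supp (mu0 j)) ->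
       avgfit (post J tt eps mu0) st j th > avgfit (post J tt eps mu0) st j (tt j))
  \/ balanced (post J tt eps mu0) st.
Proof.
  intros HE Het [Hb Hd].
  set (mu := post J tt eps mu0) in *.
  assert (Hs : forall k, is_mixed (st k theta0) /\ st k theta0 x1 >= 1/4 /\ st k theta0 x2 >= 1/4).
  { intro k. destruct (Hb k theta0 (theta0_in J tt eps k)) as [Hm _].
    assert (Hin : In theta0 (supp (mu0 k))) by (left; reflexivity).
    pose proof (Hd k theta0 Hin) as D.
    pose proof (enorm_ge _ _ x1 D) as D1. pose proof (enorm_ge _ _ x2 D) as D2.
    unfold s0, half_half in D1, D2. pose proof Hm as [Hn _]. pose proof (Hn x1). pose proof (Hn x2).
    pose proof (Rle_trans _ _ _ D1 (Rle_refl _)).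
    assert (0 <= etab). { pose proof (enorm_ge _ _ x1 D). unfold enorm in D. pose proof (sqrt_pos (sum_act (fun a => (st k theta0 a - s0 k theta0 a) * (st k theta0 a - s0 k theta0 a)))). lra. }
    split; [exact Hm|]. split; nra. }
  assert (Hmut : forall k, (forall a, 0 <= Ef J eps k * st k (tt k) a) /\
      Ef J eps k * (st k (tt k) x1 + st k (tt k) x2 + st k (tt k) x3) = Ef J eps k).
  { intro k. unfold Ef. destruct (J k) eqn:Hj.
    - destruct (Hb k (tt k) (tt_in J tt eps k Hj)) as [[Hn Hsum] _]. unfold sum_act in Hsum.
      pose proof (HE k). unfold Ef in H; rewrite Hj in H.
      split; [intro a; pose proof (Hn a); nra| rewrite Hsum; ring].
    - split; [intro; lra| ring]. }
  assert (Hagg : forall k a, aggr mu st k a = Ef J eps k * st k (tt k) a + (1 - Ef J eps k) * st k theta0 a)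
    by (intros; unfold mu; rewrite aggr_post; reflexivity).
  assert (Hq1 : forall k, aggr mu st k x1 > 0 /\ aggr mu st k x2 >= 0).
  { intro k. rewrite !Hagg. destruct (Hmut k) as [M _]. pose proof (M x1). pose proof (M x2).
    destruct (Hs k) as [_ [? ?]]. pose proof (HE k). nra. }
  assert (Hinc : forall k, aggr mu st (other k) x1 = aggr mu st (other k) x2 /\ st k theta0 x3 = 0).
  { intro k. destruct (Hs k) as [Hm [? ?]]. destruct (Hq1 (other k)).
    apply (inc_analysis k); auto; try lra.
    intros sg Hsg. destruct (Hb k theta0 (theta0_in J tt eps k)) as [_ B].
    pose proof (B sg Hsg) as B'. unfold mu in *. rewrite !exp_pay in B'. exact B'. }
  assert (Hq : forall k, is_mixed (aggr mu st k) /\ aggr mu st k x1 = aggr mu st k x2 /\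
                  aggr mu st k x3 <= 1/10).
  { intro k. pose proof (Hinc (other k)) as HH. rewrite other_other in HH. destruct HH as [Heq _].
    destruct (Hinc k) as [_ H3]. destruct (Hmut k) as [M Ms]. destruct (Hs k) as [[Hn Hsum] _].
    unfold sum_act in Hsum. pose proof (HE k).
    split; [|split; [exact Heq|]].
    - split. intro a. rewrite Hagg. pose proof (M a). pose proof (Hn a). nra.
      unfold sum_act. rewrite !Hagg. nra.
    - rewrite Hagg, H3. pose proof (M x1). pose proof (M x2). nra. }
  assert (Hdiff : forall j, J j = true ->
     avgfit mu st j theta0 - avgfit mu st j (tt j) =
     st j (tt j) x3 * (aggr mu st (other j) x1 - 2 * aggr mu st (other j) x3) /\
     aggr mu st (other j) x1 - 2 * aggr mu st (other j) x3 > 0 /\ 0 <= st j (tt j) x3).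
  { intros j Hj. destruct (Hb j (tt j) (tt_in J tt eps j Hj)) as [Hm _].
    destruct (Hq (other j)) as [[Qn Qs] [Q12 Q3]]. unfold sum_act in Qs.
    split; [|split; [lra| apply (proj1 Hm)]].
    unfold avgfit. apply fit_diff; auto. apply (Hs j). apply (Hinc j). }
  destruct (classic (exists j, J j = true /\ st j (tt j) x3 > 0)) as [[j [Hj Hpos]]|Hno].
  - left. exists j. split; auto. intros th Hth. unfold mu0, supp in Hth. simpl in Hth.
    destruct Hth as [<-|[]]. destruct (Hdiff j Hj) as [D [D1 D2]].
    assert (st j (tt j) x3 * (aggr mu st (other j) x1 - 2 * aggr mu st (other j) x3) > 0) by nra.
    lra.
  - right.
    assert (Heq : forall i th, In th (supp (mu i)) -> avgfit mu st i th = avgfit mu st i theta0).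
    { intros i th Hth. apply in_supp_post in Hth. destruct Hth as [[Hj ->] | ->]; [|reflexivity].
      destruct (Hdiff i Hj) as [D [D1 D2]].
      assert (st i (tt i) x3 = 0).
      { destruct (Rle_lt_or_eq_dec _ _ D2) as [Hl|Hl]; [|auto].
        exfalso; apply Hno; exists i; split; auto. }
      rewrite H in D. lra. }
    intros i th th' H1 H2. rewrite (Heq i th H1), (Heq i th' H2). reflexivity.
Qed.

Theorem mainTheorem13 : bne mu0 s0 /\ stable mu0 s0.
Proof.
  split; [apply bne0|]. split.
  { intros i th th' H1 H2. unfold mu0, supp in H1, H2; simpl in H1, H2.
    destruct H1 as [<-|[]]; destruct H2 as [<-|[]]; reflexivity. }
  intros J tt Hex Htt eta Heta.
  assert (Htt' : forall i, J i = true -> tt i <> theta0).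
  { intros i Hj He. apply (Htt i Hj). rewrite He. left; reflexivity. }
  set (etab := Rmin (eta / 2) (1/4)).
  assert (Het : 0 < etab /\ etab < eta /\ etab <= 1/4).
  { unfold etab. split; [apply Rmin_glb_lt; lra|]. split.
    - pose proof (Rmin_l (eta/2) (1/4)); lra.
    - apply Rmin_r. }
  set (epsb := Rmin (Rmin (1/10) (etab/2)) (Rmin (marg P1 (tt P1)) (marg P2 (tt P2)))).
  pose proof (marg_pos P1 (tt P1)). pose proof (marg_pos P2 (tt P2)).
  assert (Heb : 0 < epsb /\ epsb <= 1/10 /\ epsb <= etab / 2 /\
     epsb <= marg P1 (tt P1) /\ epsb <= marg P2 (tt P2)).
  { unfold epsb. split.
    - apply Rmin_glb_lt; apply Rmin_glb_lt; lra.
    - pose proof (Rmin_l (Rmin (1/10) (etab/2)) (Rmin (marg P1 (tt P1)) (marg P2 (tt P2)))).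
      pose proof (Rmin_r (Rmin (1/10) (etab/2)) (Rmin (marg P1 (tt P1)) (marg P2 (tt P2)))).
      pose proof (Rmin_l (1/10) (etab/2)). pose proof (Rmin_r (1/10) (etab/2)).
      pose proof (Rmin_l (marg P1 (tt P1)) (marg P2 (tt P2))).
      pose proof (Rmin_r (marg P1 (tt P1)) (marg P2 (tt P2))). lra. }
  exists etab, epsb. split; [lra|]. split; [lra|].
  intros eps Heps Hn.
  assert (HE : forall i, 0 <= Ef J eps i <= 1/10 /\ Ef J eps i <= epsb).
  { intro i. unfold normJ in Hn. pose proof (Rmax_l (Ef J eps P1) (Ef J eps P2)).
    pose proof (Rmax_r (Ef J eps P1) (Ef J eps P2)).
    assert (Ef J eps i <= Rmax (Ef J eps P1) (Ef J eps P2)) by (destruct i; auto).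
    unfold Ef in *. destruct (J i) eqn:Hj.
    - pose proof (Heps i Hj). lra.
    - lra. }
  assert (HE1 : forall i, 0 <= Ef J eps i <= 1/10) by (intro i; apply HE).
  split.
  - exists (stf J tt eps). split.
    + apply bne_stf; auto. intros i o. destruct (HE o). destruct i; lra.
    + intros i th Hth. unfold mu0, supp in Hth; simpl in Hth. destruct Hth as [<-|[]].
      rewrite stf_th0. unfold s0. apply sig_close; auto. destruct (HE i); lra.
  - intros st Hst. apply dichotomy with etab; auto; lra.
Qed.
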